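(* Let $q\ge2$ and $0<\delta\le\frac{q-1}{q}$. Then $$\lim_{n\to\infty}\frac{\log_q A_q(n,2\delta n)}{n}\ge 1-(1+\delta)H_q\!\left(\frac{\delta}{1+\delta}\right)+\delta\log_q(q-1)-H_q(\delta).$$
   Context: $\Sigma_q$ is an alphabet of size $q$. The insdel distance $d(\mathbf a,\mathbf b)$ is the minimum number of single-symbol insertions and deletions needed to transform $\mathbf a$ into $\mathbf b$. The minimum insdel distance of $\mathcal{C}\subseteq\Sigma_q^n$ is the minimum of $d(\mathbf a,\mathbf b)$ over distinct $\mathbf a,\mathbf b\in\mathcal{C}$. $A_q(n,d)$ is the maximum cardinality of a code $\mathcal{C}\subseteq\Sigma_q^n$ with minimum insdel distance at least $d$. $H_q(x)=x\log_q(q-1)-x\log_qx-(1-x)\log_q(1-x)$ for $0<x<1$, $H_q(0)=H_q(1)=0$. *)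

(* Defs.v *)
From HB Require Import structures.
From mathcomp Require Import all_boot all_order all_algebra.
From mathcomp Require Import all_classical all_reals all_analysis.
Set Implicit Arguments. Unset Strict Implicit. Unset Printing Implicit Defensive.
Import Order.TTheory GRing.Theory Num.Theory.
Local Open Scope ring_scope.

Definition insdel_step (T : Type) (a c : seq T) : Prop :=
  (exists (i : nat) (x : T), c = take i a ++ x :: drop i a) \/
  (exists (i : nat) (x : T), a = take i c ++ x :: drop i c).

Fixpoint insdel_reach (T : Type) (k : nat) (a b : seq T) : Prop :=
  match k with
  | 0 => a = b
  | k'.+1 => exists c, insdel_reach k' a c /\ insdel_step c b
  end.

Lemma insdel_reach_nil (T : Type) (b : seq T) : insdel_reach (size b) [::] b.
Proof.
elim: b => [//|y b IH] /=; exists b; split => //.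
by left; exists 0%N, y; rewrite take0 drop0.
Qed.

Lemma insdel_reach_cons (T : Type) k (x : T) (a b : seq T) :
  insdel_reach k a b -> insdel_reach k.+1 (x :: a) b.
Proof.
elim: k b => [|k IH] b /=.
  move=> ->; exists (x :: b); split => //.
  by right; exists 0%N, x; rewrite take0 drop0.
by case=> c [Hc Hs]; exists c; split => //; apply: IH.
Qed.

Lemma insdel_reach_ex (T : Type) (a b : seq T) :
  exists k, insdel_reach k a b.
Proof.
exists (size a + size b)%N; elim: a => [|x a IH] /=.
  exact: insdel_reach_nil.
by apply: insdel_reach_cons.
Qed.

Lemma insdel_reach_exb (T : Type) (a b : seq T) :
  exists k, (fun k => `[< insdel_reach k a b >]) k.
Proof. by case: (insdel_reach_ex a b) => k Hk; exists k; apply/asboolP. Qed.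

Definition insdel_dist (T : Type) (a b : seq T) : nat :=
  ex_minn (insdel_reach_exb a b).

Definition min_insdel_dist_ge (R : realType) (q n : nat)
    (C : {set n.-tuple 'I_q}) (d : R) : bool :=
  [forall a in C, forall b in C,
     (a != b) ==> (d <= (insdel_dist (tval a) (tval b))%:R)].

Definition A_insdel (R : realType) (q n : nat) (d : R) : nat :=
  \max_(C : {set n.-tuple 'I_q} | min_insdel_dist_ge C d) #|C|.

Definition logq (R : realType) (q : nat) (x : R) : R := ln x / ln q%:R.

Definition Hq (R : realType) (q : nat) (x : R) : R :=
  if (0 < x) && (x < 1) then
    x * logq q (q%:R - 1) - x * logq q x - (1 - x) * logq q (1 - x)
  else 0.

(* Main.v *)
Require Import Defs.
From HB Require Import structures.
From mathcomp Require Import all_boot all_order all_algebra.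
From mathcomp Require Import all_classical all_reals all_analysis.
From mathcomp Require Import zify ring lra.
Import Order.TTheory GRing.Theory Num.Theory.
Set Implicit Arguments. Unset Strict Implicit. Unset Printing Implicit Defensive.

Section Comb.
Variable q : nat.

Lemma sum_tuple_cons m (F : m.+1.-tuple 'I_q -> nat) :
  \sum_(t : m.+1.-tuple 'I_q) F t =
  \sum_(y : 'I_q) \sum_(t : m.-tuple 'I_q) F [tuple of y :: t].
Proof.
rewrite pair_big /=.
rewrite (reindex (fun p : 'I_q * m.-tuple 'I_q => [tuple of p.1 :: p.2])) //=.
exists (fun t : m.+1.-tuple 'I_q => (thead t, [tuple of behead t])) => [[y t] _|t _] /=.
  by congr (_, _); apply: val_inj.
by rewrite [RHS]tuple_eta.
Qed.

Definition Nsup n (u : seq 'I_q) := \sum_(b : n.-tuple 'I_q) subseq u b.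
Definition Esub m (a : seq 'I_q) := \sum_(s : m.-tuple 'I_q) subseq s a.

Lemma sum_ifeq (x : 'I_q) (A B : nat) :
  \sum_(y : 'I_q) (if y == x then A else B) = A + (q.-1) * B.
Proof.
rewrite (bigD1 x) //= eqxx; congr (_ + _).
rewrite (eq_bigr (fun _ => B)); last by move=> y /negbTE ->.
rewrite sum_nat_const cardC1 card_ord mulnC.
by [].
Qed.

Lemma Nsup_nil n : Nsup n [::] = q ^ n.
Proof.
rewrite /Nsup (eq_bigr (fun _ => 1)); last by move=> b _; rewrite sub0seq.
by rewrite sum_nat_const card_tuple card_ord muln1.
Qed.

Lemma Nsup_cons n x u : Nsup n.+1 (x :: u) = Nsup n u + q.-1 * Nsup n (x :: u).
Proof.
rewrite /Nsup sum_tuple_cons /=.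
rewrite -(sum_ifeq x); apply: eq_bigr => y _.
case: (y =P x) => [->|/eqP yx]; apply: eq_bigr => t _ //=.
  by rewrite eqxx.
by rewrite eq_sym (negbTE yx).
Qed.

Lemma Nsup_big n u : n < size u -> Nsup n u = 0.
Proof.
move=> H; rewrite /Nsup big1 // => b _.
apply/eqP; rewrite eqb0; apply/negP => /size_subseq; rewrite size_tuple.
by rewrite leqNgt H.
Qed.

Lemma Esub0 a : Esub 0 a = 1.
Proof.
rewrite /Esub (eq_bigr (fun _ => 1)); last first.
  by move=> t _; rewrite (size0nil (size_tuple t)) sub0seq.
by rewrite sum_nat_const card_tuple expn0 muln1.
Qed.

Lemma Esub_nil m : Esub m.+1 [::] = 0.
Proof. by rewrite /Esub big1 // => t _; rewrite subseq0 -size_eq0 size_tuple. Qed.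

Lemma Esub_cons m x a : Esub m.+1 (x :: a) <= Esub m a + Esub m.+1 a.
Proof.
rewrite /Esub sum_tuple_cons /= (bigD1 x) //= leq_add //.
  by apply: leq_sum => t _; rewrite eqxx.
rewrite [X in _ <= X]sum_tuple_cons.
rewrite [X in _ <= X](bigD1 x) //= -[X in X <= _]add0n leq_add //.
by apply: leq_sum => y /negbTE yx; rewrite yx.
Qed.

Lemma Esub_binom m a : Esub m a <= 'C(size a, m).
Proof.
elim: a m => [|x a IH] [|m] /=; rewrite ?Esub0 ?Esub_nil ?bin0 //.
rewrite binS; apply: leq_trans (Esub_cons _ _ _) _.
by rewrite addnC leq_add.
Qed.

End Comb.

Lemma del_subseq (T : eqType) (s u v : seq T) x :
  subseq s (u ++ x :: v) ->
  exists s', [/\ subseq s' s, subseq s' (u ++ v) & size s <= (size s').+1].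
Proof.
case/subseqP => m sm ->.
have Hm : m = take (size u) m ++ drop (size u) m by rewrite cat_take_drop.
have : size (drop (size u) m) = (size v).+1 by rewrite size_drop sm size_cat /=; lia.
case E: (drop (size u) m) => [//|y m2] [sz2].
have sz1 : size (take (size u) m) = size u by rewrite size_take sm size_cat; case: ltnP => //; lia.
rewrite Hm E mask_cat //; clear E Hm.
exists (mask (take (size u) m) u ++ mask m2 v); split.
- apply: cat_subseq => //; case: y; [exact: subseq_cons | exact: subseq_refl].
- have := mask_subseq (take (size u) m ++ m2) (u ++ v); rewrite mask_cat //.

- rewrite !size_cat; case: y => /=; lia.
Qed.

Lemma ins_subseq (T : eqType) (c : seq T) i x :
  subseq c (take i c ++ x :: drop i c).
Proof.
by rewrite -{1}(cat_take_drop i c) cat_subseq // subseq_cons.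
Qed.

Lemma reach_common (T : eqType) k (a b : seq T) :
  insdel_reach k a b ->
  exists s, [/\ subseq s a, subseq s b & size a + size b <= k + 2 * size s].
Proof.
elim: k b => [|k IH] b /=.
  move=> <-; exists a; split => //; lia.
case=> c [/IH [s [sa sc Hs]] [[i [x ->]]|[i [x Ec]]]].
  exists s; split => //; first exact: subseq_trans sc (ins_subseq _ _ _).
  move: Hs; rewrite size_cat /= size_take size_drop.
  have := size c; case: (ltnP i (size c)) => Hi _; lia.
move: sc; rewrite Ec => /del_subseq [s' [s's s'b Hsz]].
rewrite cat_take_drop in s'b.
exists s'; split => //; first exact: subseq_trans s's sa.
move: Hs; rewrite Ec !size_cat /=.
rewrite -{3}(cat_take_drop i b) size_cat; lia.
Qed.

Local Open Scope ring_scope.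

Lemma GV (R : realType) (q n : nat) (d : R)
  (Ball : n.-tuple 'I_q -> {set n.-tuple 'I_q}) (V : nat) :
  (forall a, a \in Ball a) ->
  (forall a b, ~~ (d <= (insdel_dist (tval a) (tval b))%:R) ->
      (b \in Ball a) && (a \in Ball b)) ->
  (forall a, #|Ball a| <= V)%N ->
  (q ^ n <= A_insdel q n d * V)%N.
Proof.
move=> H1 H2 H3.
have P0 : min_insdel_dist_ge (finset.set0 : {set n.-tuple 'I_q}) d.
  by apply/forall_inP => a; rewrite inE.
have Apos : (0 < #|[pred C : {set n.-tuple 'I_q} | min_insdel_dist_ge C d]|)%N.
  by apply/card_gt0P; exists finset.set0.
have [C0 PC0 Emax] := @eq_bigmax_cond _ [pred C : {set n.-tuple 'I_q} | min_insdel_dist_ge C d]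
   (fun C => #|C|) Apos.
rewrite /A_insdel Emax.
have cover : forall w, exists2 c, c \in C0 & w \in Ball c.
  move=> w; case: (boolP [exists c in C0, w \in Ball c]) => [/exists_inP //|Hn0]; exfalso.
  have Hn : ~ (exists2 c, c \in C0 & w \in Ball c).
    by move=> H; move/negP: Hn0; apply; apply/exists_inP.
  have wC : w \notin C0.
    by apply/negP => wC; apply: Hn; exists w.
  have P1 : min_insdel_dist_ge (w |: C0) d.
    apply/forall_inP => a; rewrite in_setU1 => /orP Ha.
    apply/forall_inP => b; rewrite in_setU1 => /orP Hb.
    apply/implyP => ab; apply/negPn/negP => Hd; have /andP [Hba Hab] := H2 _ _ Hd.
    case: Ha => [/eqP Ea|Ha]; case: Hb => [/eqP Eb|Hb].
    - by rewrite Ea Eb eqxx in ab.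
    - by apply: Hn; exists b => //; rewrite -Ea.
    - by apply: Hn; exists a => //; rewrite -Eb.
    - by move: Hd; move/forall_inP: PC0 => /(_ a Ha) /forall_inP /(_ b Hb) /implyP /(_ ab) ->.
  have := @leq_bigmax_cond _ [pred C : {set n.-tuple 'I_q} | min_insdel_dist_ge C d] (fun C => #|C|) _ P1.
  rewrite Emax cardsU1 wC /=.
  by rewrite ltnn.
have -> : (q ^ n = \sum_(w : n.-tuple 'I_q) 1)%N.
  by rewrite sum_nat_const card_tuple card_ord muln1.
apply: (@leq_trans (\sum_(w : n.-tuple 'I_q) \sum_(c in C0) (w \in Ball c) : nat)).
  apply: leq_sum => w _; have [c cC wc] := cover w.
  by rewrite (bigD1 c) //= wc.
rewrite exchange_big /= -sum_nat_const.
apply: leq_sum => c _; apply: leq_trans (H3 c).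
rewrite -sum1_card (big_mkcond (fun i => i \in Ball c)) /=; apply: leq_sum => w _.
by case: (w \in Ball c).
Qed.

Lemma Nsup_bound (R : realType) (q : nat) (p : R) :
  (2 <= q)%N -> 0 < p -> p < 1 -> p * q%:R <= q%:R - 1 ->
  forall n u, (size u <= n)%N ->
  (@Nsup q n u)%:R <= (1 - p)^-1 ^+ n * ((q%:R - 1) * (1 - p) / p) ^+ (n - size u).
Proof.
move=> q2 p0 p1 pq.
set c := (1 - p)^-1; set Q := q%:R - 1; set r := Q * (1 - p) / p.
have Q0 : 0 < Q by rewrite /Q subr_gt0 ltr1n.
have c1 : 1 <= c by rewrite /c invf_ge1 ?subr_gt0 // gerBl ltW.
have c0 : 0 < c by apply: lt_le_trans c1.
have r0 : 0 < r by rewrite /r divr_gt0 // mulr_gt0 // subr_gt0.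
have cr : c * r = Q / p.
  rewrite /c /r; field; lra.
have rQ : r + Q = Q / p.
  rewrite /r; field; lra.
have qm : (q.-1)%:R = Q by rewrite /Q -{2}(prednK (ltnW q2)) mulrSr addrK.
elim=> [|n IH] u.
  rewrite leqn0 size_eq0 => /eqP ->.
  by rewrite Nsup_nil !expr0 mulr1.
case: u => [|x u] Hs.
  rewrite Nsup_nil natrX subn0 -exprMn cr.
  apply: lerXn2r; rewrite ?nnegrE ?ler0n //; first by apply: divr_ge0; lra.
  by rewrite ler_pdivlMr // mulrC.
rewrite Nsup_cons natrD natrM qm /= subSS.
have Hu : (size u <= n)%N by [].
have IH1 := IH u Hu.
case: (ltnP (size u) n) => Hlt.
  have IH2 := IH (x :: u) Hlt.
  rewrite -(subnSK Hlt) in IH1 *.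
  move: IH2 => /= IH2.
  set k := (n - (size u).+1)%N in IH1 IH2 *.
  apply: le_trans (lerD IH1 (ler_wpM2l (ltW Q0) IH2)) _.
  rewrite le_eqVlt; apply/orP; left; apply/eqP.
  rewrite !exprS.
  have -> : c * c ^+ n * (r * r ^+ k) = c ^+ n * r ^+ k * (c * r) by ring.
  rewrite cr -rQ; ring.
have -> : size u = n by apply/eqP; rewrite eqn_leq Hu Hlt.
rewrite (@Nsup_big q n (x :: u)) /=; last by rewrite ltnS Hlt.
rewrite mulr0 addr0 subnn.
apply: le_trans IH1 _.
have -> : (n - size u = 0)%N by apply/eqP; rewrite subn_eq0.
rewrite expr0 !mulr1 exprS ler_peMl //.
by apply: exprn_ge0; apply: ltW.
Qed.

Lemma binom_bound (R : realType) (p : R) (n T : nat) :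
  0 <= p <= 1 -> (T <= n)%N ->
  (1 - p) ^+ (n - T) * p ^+ T *+ 'C(n, T) <= 1.
Proof.
move=> /andP [p0 p1] Tn.
apply: (@le_trans _ _ ((1 - p + p) ^+ n)); last by rewrite subrK expr1n.
rewrite [X in _ <= X]exprDn (bigD1 (Ordinal (Tn : (T < n.+1)%N))) //=.
rewrite lerDl; apply: sumr_ge0 => i _.
by apply: mulrn_wge0; apply: mulr_ge0; apply: exprn_ge0; lra.
Qed.

Lemma trunc_mul (R : realType) (T : nat) (x y : R) :
  T%:R <= x -> x < T%:R + 1 -> T%:R * y <= x * y + `|y|.
Proof.
move=> h1 h2; case: (lerP 0 y) => hy.
  by rewrite ger0_norm //; apply: le_trans (ler_wpM2r hy h1) _; rewrite lerDl.
rewrite ltr0_norm //.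
have : T%:R * y <= (x - 1) * y by rewrite ler_wnM2r //; [lra|lra].
rewrite mulrBl mul1r; lra.
Qed.

Section PerN.
Variables (R : realType) (q : nat) (delta : R) (n : nat).
Hypotheses (q2 : (2 <= q)%N) (d0 : 0 < delta)
  (dq : delta <= (q%:R - 1) / q%:R) (n1 : (1 <= n)%N).

Let T := Num.truncn (delta * n%:R).
Let m := (n - T)%N.

Lemma d1 : delta < 1.
Proof.
apply: le_lt_trans dq _; rewrite ltr_pdivrMr ?ltr0n; last by apply: leq_trans q2.
lra.
Qed.

Lemma dq' : delta * q%:R <= q%:R - 1.
Proof. by rewrite -ler_pdivlMr // ltr0n; apply: leq_trans q2. Qed.

Lemma T_le : T%:R <= delta * n%:R.
Proof. by rewrite /T truncn_le mulr_ge0 // ltW. Qed.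

Lemma T_gt : delta * n%:R < T%:R + 1.
Proof. by have := truncnS_gt (delta * n%:R); rewrite -natr1. Qed.

Lemma Tn : (T <= n)%N.
Proof.
rewrite -(ler_nat R); apply: le_trans T_le _.
have := d1; have : 0 <= n%:R :> R by [].
nra.
Qed.

Definition Ball (a : n.-tuple 'I_q) : {set n.-tuple 'I_q} :=
  [set b : n.-tuple 'I_q | [exists s : m.-tuple 'I_q, subseq s a && subseq s b]].

Lemma Ball_refl a : a \in Ball a.
Proof.
rewrite inE; apply/existsP.
have sz : size (take m a) == m by rewrite size_take size_tuple /m; apply/eqP; case: ltnP; lia.
by exists (Tuple sz); rewrite /= take_subseq.
Qed.

Lemma Ball_close a b :
  ~~ (2 * delta * n%:R <= (insdel_dist (tval a) (tval b))%:R) ->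
  (b \in Ball a) && (a \in Ball b).
Proof.
rewrite -ltNge => hd.
have hr : insdel_reach (insdel_dist a b) a b.
  by rewrite /insdel_dist; case: ex_minnP => k /asboolP.
have [s [sa sb hs]] := reach_common hr.
move: hd hs; set k := insdel_dist a b => hd hs.
rewrite !size_tuple in hs.
have sn : (size s <= n)%N by have := size_subseq sa; rewrite size_tuple.
have hT : (n - size s <= T)%N.
  rewrite /T truncn_ge_nat; last by rewrite mulr_ge0 // ltW.
  have h2 : (2 * (n - size s) <= k)%N by lia.
  have : (2 * (n - size s))%:R <= k%:R :> R by rewrite ler_nat.
  rewrite natrM => h3.
  have : 2 * (n - size s)%:R < 2 * (delta * n%:R) :> R.
    by apply: le_lt_trans h3 _; rewrite mulrA.
  by rewrite ltr_pM2l // => /ltW.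
have sz : size (drop (size s - m) s) == m.
  by rewrite size_drop /m; apply/eqP; lia.
have s's : subseq (drop (size s - m) s) s by apply: drop_subseq.
rewrite !inE; apply/andP; split; apply/existsP; exists (Tuple sz) => /=;
  by rewrite (subseq_trans s's sa) (subseq_trans s's sb).
Qed.

Definition Nmax := (\max_(s : m.-tuple 'I_q) Nsup n s)%N.

Lemma Ball_card a : (#|Ball a| <= 'C(n, T) * Nmax)%N.
Proof.
apply: (@leq_trans (\sum_(b : n.-tuple 'I_q) \sum_(s : m.-tuple 'I_q) (subseq s a * subseq s b))%N).
  rewrite -sum1_card (big_mkcond (fun i => i \in Ball a)) /=; apply: leq_sum => b _.
  case: ifP => // /[!inE] /existsP [s /andP [sa sb]].
  by rewrite (bigD1 s) //= sa sb.
rewrite exchange_big /=.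
apply: (@leq_trans (\sum_(s : m.-tuple 'I_q) (subseq s a * Nmax))%N).
  apply: leq_sum => s _; rewrite -big_distrr /= leq_mul //.
  exact: (@leq_bigmax _ (fun s : m.-tuple 'I_q => Nsup n s) s).
rewrite -big_distrl /= leq_mul //.
have := Esub_binom m a; rewrite size_tuple /m bin_sub //; exact: Tn.
Qed.

Let Q := q%:R - 1 : R.
Let c := (1 - delta)^-1.
Let r := Q * (1 - delta) / delta.

Lemma Q0 : 0 < Q.
Proof. by rewrite /Q subr_gt0 ltr1n. Qed.

Lemma Nmax_bound : (Nmax%:R : R) <= c ^+ n * r ^+ T.
Proof.
have hpos : (0 < #|{: m.-tuple 'I_q}|)%N.
  by rewrite card_tuple card_ord expn_gt0; apply/orP; left; apply: leq_trans q2.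
have [s0 Hs0] := @bigop.eq_bigmax _ (fun s : m.-tuple 'I_q => Nsup n s) hpos.
rewrite /Nmax Hs0.
have := @Nsup_bound R q delta q2 d0 d1 dq' n s0.
rewrite size_tuple /m subKn ?Tn //; apply; exact: leq_subr.
Qed.

Lemma C_bound : ('C(n, T)%:R : R) <= ((1 - delta) ^+ (n - T) * delta ^+ T)^-1.
Proof.
have hP : 0 < (1 - delta) ^+ (n - T) * delta ^+ T.
  have h1 : 0 < 1 - delta by have := d1; lra.
  by rewrite mulr_gt0 // exprn_gt0.
rewrite -div1r ler_pdivlMr // mulrC mulr_natr.
apply: binom_bound; last exact: Tn.
by have := d1; rewrite ltW //=; lra.
Qed.

Lemma lnA_bound :
  n%:R * (ln q%:R + 2 * (1 - delta) * ln (1 - delta) + 2 * delta * ln delta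
           - delta * ln Q)
  - `|2 * (ln (1 - delta) - ln delta) + ln Q|
  <= ln (A_insdel q n (2 * delta * n%:R))%:R.
Proof.
set A := A_insdel q n _.
have GVb := @GV R q n (2 * delta * n%:R) Ball ('C(n, T) * Nmax) Ball_refl Ball_close Ball_card.
have hq0 : (0 < q ^ n)%N by rewrite expn_gt0; apply/orP; left; apply: leq_trans q2.
have hAV : (0 < A * ('C(n, T) * Nmax))%N by apply: leq_trans GVb.
have hA : (0 < A)%N by move: hAV; rewrite !muln_gt0 => /and3P[].
have hC : (0 < 'C(n, T))%N by move: hAV; rewrite !muln_gt0 => /and3P[].
have hN : (0 < Nmax)%N by move: hAV; rewrite !muln_gt0 => /and3P[].
have h1d : 0 < 1 - delta by have := d1; lra.
have hQ := Q0.
have GVr : (q%:R ^+ n : R) <= A%:R * ('C(n, T)%:R * Nmax%:R).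
  by rewrite -!natrM -natrX ler_nat.
have lnGV : ln (q%:R ^+ n : R) <= ln (A%:R : R) + ln ('C(n, T)%:R : R) + ln (Nmax%:R : R).
  have a0 : (0 : R) < A%:R by rewrite ltr0n.
  have c0 : (0 : R) < 'C(n, T)%:R by rewrite ltr0n.
  have n0 : (0 : R) < Nmax%:R by rewrite ltr0n.
  have q0 : (0 : R) < q%:R ^+ n by rewrite exprn_gt0 // ltr0n; apply: leq_trans q2.
  rewrite -addrA -lnM ?posrE // -lnM ?posrE ?mulr_gt0 //.
  by rewrite ler_ln ?posrE ?mulr_gt0.
have dd0 : 0 < delta by [].
have P1 : 0 < (1 - delta) ^+ (n - T) by rewrite exprn_gt0.
have P2 : 0 < delta ^+ T by rewrite exprn_gt0.
have P12 : 0 < (1 - delta) ^+ (n - T) * delta ^+ T by rewrite mulr_gt0.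
have lnC : ln ('C(n, T)%:R : R) <= - ((n - T)%:R * ln (1 - delta) + T%:R * ln delta).
  apply: le_trans (_ : ln (((1 - delta) ^+ (n - T) * delta ^+ T)^-1) <= _).
    rewrite ler_ln ?posrE ?ltr0n ?invr_gt0 //; exact: C_bound.
  rewrite lnV ?posrE // lnM ?posrE // !lnXn //.
  by rewrite !mulr_natl.
have c0 : 0 < c by rewrite /c invr_gt0.
have r0 : 0 < r by rewrite /r divr_gt0 // mulr_gt0.
have cn0 : 0 < c ^+ n by rewrite exprn_gt0.
have rT0 : 0 < r ^+ T by rewrite exprn_gt0.
have crT : 0 < c ^+ n * r ^+ T by rewrite mulr_gt0.
have Qd : 0 < Q * (1 - delta) by rewrite mulr_gt0.
have lnN : ln (Nmax%:R : R) <= n%:R * (- ln (1 - delta)) + T%:R * (ln Q + ln (1 - delta) - ln delta).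
  apply: le_trans (_ : ln (c ^+ n * r ^+ T) <= _).
    rewrite ler_ln ?posrE ?ltr0n //; exact: Nmax_bound.
  rewrite lnM ?posrE // !lnXn //.
  rewrite !mulr_natl /c /r lnV ?posrE // ln_div ?posrE // lnM ?posrE //.
have lnq : ln (q%:R ^+ n : R) = n%:R * ln q%:R.
  by rewrite lnXn ?mulr_natl // ltr0n; apply: leq_trans q2.
have hTm := trunc_mul (2 * (ln (1 - delta) - ln delta) + ln Q) T_le T_gt.
rewrite natrB ?Tn // in lnC.
rewrite lnq in lnGV.
move: lnN lnC lnGV hTm.
set W := 2 * (ln (1 - delta) - ln delta) + ln Q.
set ab := `|W|.
generalize (ln (A%:R : R)) (ln ('C(n, T)%:R : R)) (ln (Nmax%:R : R)) => LA LC LN.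
move=> lnN lnC lnGV hTm.
have HCN : LC + LN <= - (2 * (n%:R * ln (1 - delta))) + T%:R * W.
  apply: le_trans (lerD lnC lnN) _; rewrite /W le_eqVlt; apply/orP; left; apply/eqP; ring.
have E : n%:R * (ln q%:R + 2 * (1 - delta) * ln (1 - delta) + 2 * delta * ln delta - delta * ln Q)
   = n%:R * ln q%:R + 2 * (n%:R * ln (1 - delta)) - delta * n%:R * W by rewrite /W; ring.
rewrite E.
move: HCN lnGV hTm.
generalize (n%:R * ln (q%:R : R)) (n%:R * ln (1 - delta)) (T%:R * W) (delta * n%:R * W) => X1 X2 X3 X4.
move=> *; lra.
Qed.

End PerN.

Lemma ln_ge_inv (R : realType) (x : R) : 0 < x -> 1 - x^-1 <= ln x.
Proof.
move=> x0.
have h := @le_ln1Dx R (x^-1 - 1).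
have hx : 0 < x^-1 by rewrite invr_gt0.
have e : 1 + (x^-1 - 1) = x^-1 by ring.
rewrite e lnV ?posrE // in h.
have : -1 < x^-1 - 1 by lra.
move=> /h; lra.
Qed.

Lemma rhs_le (R : realType) (q : nat) (delta : R) :
  (2 <= q)%N -> 0 < delta -> delta < 1 ->
  1 - (1 + delta) * Hq q (delta / (1 + delta)) + delta * logq q (q%:R - 1) - Hq q delta
  <= (ln q%:R + 2 * (1 - delta) * ln (1 - delta) + 2 * delta * ln delta
           - delta * ln (q%:R - 1)) / ln q%:R.
Proof.
move=> q2 d0 d1.
have lq : 0 < ln (q%:R : R) by apply: ln_gt0; rewrite ltr1n.
have hx : 0 < delta / (1 + delta) < 1.
  apply/andP; split; first by rewrite divr_gt0 //; lra.
  by rewrite ltr_pdivrMr; lra.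
have hd : 0 < delta < 1 by apply/andP.
rewrite /Hq hx hd /logq.
have e1 : ln (delta / (1 + delta)) = ln delta - ln (1 + delta).
  by rewrite ln_div // posrE; lra.
have e2 : ln (1 - delta / (1 + delta)) = - ln (1 + delta).
  have -> : 1 - delta / (1 + delta) = (1 + delta)^-1 by field; lra.
  by rewrite lnV // posrE; lra.
rewrite e1 e2.
have h1 := ln_ge_inv (_ : 0 < 1 + delta).
have h2 := ln_ge_inv (_ : 0 < 1 - delta).
have k1 : delta <= (1 + delta) * ln (1 + delta).
  have := h1 ltac:(lra).
  have -> : 1 - (1 + delta)^-1 = delta / (1 + delta) by field; lra.
  move=> h; have : (1 + delta) * (delta / (1 + delta)) <= (1 + delta) * ln (1 + delta).
    by rewrite ler_pM2l //; lra.
  have -> // : (1 + delta) * (delta / (1 + delta)) = delta by field; lra.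
have k2 : - delta <= (1 - delta) * ln (1 - delta).
  have := h2 ltac:(lra).
  have -> : 1 - (1 - delta)^-1 = - delta / (1 - delta) by field; lra.
  move=> h; have : (1 - delta) * (- delta / (1 - delta)) <= (1 - delta) * ln (1 - delta).
    by rewrite ler_pM2l //; lra.
  have -> // : (1 - delta) * (- delta / (1 - delta)) = - delta by field; lra.
rewrite ler_pdivlMr //.
set L := ln (q%:R : R) in lq *.
have Lne : L != 0 by rewrite gt_eqF.
apply: (@le_trans _ _ (L + 2 * (1 - delta) * ln (1 - delta) + 2 * delta * ln delta
  - delta * ln (q%:R - 1) - ((1 + delta) * ln (1 + delta) + (1 - delta) * ln (1 - delta)))); last by lra.
rewrite le_eqVlt; apply/orP; left; apply/eqP.
field; lra.
Qed.

Unset Implicit Arguments.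

Theorem mainTheorem17 (R : realType) (q : nat) (delta : R) :
  (2 <= q)%N -> 0 < delta -> delta <= (q%:R - 1) / q%:R ->
  ((1 - (1 + delta) * Hq q (delta / (1 + delta))
      + delta * logq q (q%:R - 1) - Hq q delta)%:E
   <= limn_einf (fun n : nat =>
        (logq q (A_insdel q n (2 * delta * n%:R))%:R / n%:R)%:E))%E.
Proof.
move=> q2 d0 dq.
have d1 : delta < 1.
  apply: le_lt_trans dq _; rewrite ltr_pdivrMr ?ltr0n; last by apply: leq_trans q2.
  lra.
have lq : 0 < ln (q%:R : R) by apply: ln_gt0; rewrite ltr1n.
set K0 := ln q%:R + 2 * (1 - delta) * ln (1 - delta) + 2 * delta * ln delta
           - delta * ln (q%:R - 1).
set W := `|2 * (ln (1 - delta) - ln delta) + ln (q%:R - 1)|.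
set c0 := K0 / ln (q%:R : R).
set D := W / ln (q%:R : R).
have D0 : 0 <= D by apply: divr_ge0; [exact: normr_ge0 | exact: ltW].
set u := (fun n : nat => _).
set v := (fun n : nat => (c0 - 2 * D * harmonic n)%:E).
have uv : forall n, (1 <= n)%N -> (v n <= u n)%E.
  move=> n n1; rewrite /u /v lee_fin.
  have hb := lnA_bound q2 d0 dq n1.
  have n0 : (0 : R) < n%:R by rewrite ltr0n.
  rewrite /logq /=.
  rewrite -/K0 -/W in hb.
  set LA := ln _ in hb *.
  apply: (@le_trans _ _ ((n%:R * K0 - W) / ln (q%:R : R) / n%:R)); last first.
    by rewrite ler_pM2r ?invr_gt0 // ler_pM2r ?invr_gt0.
  have -> : (n%:R * K0 - W) / ln (q%:R : R) / n%:R = c0 - D / n%:R.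
    by rewrite /c0 /D; field; apply/andP; split; apply: lt0r_neq0.
  have hn1 : (1 : R) <= n%:R by rewrite ler1n.
  have key : D / n%:R <= 2 * D / n.+1%:R.
    rewrite ler_pdivlMr // mulrAC.
    first [rewrite ler_pdivrMr // | rewrite ler_pdivlMr //]; rewrite -natr1; nra.
  by rewrite lerD2l lerN2.
apply: (@le_trans _ _ c0%:E).
  by rewrite lee_fin; apply: rhs_le.
have vc : (v @ \oo --> c0%:E)%classic.
  apply: cvg_EFin; first exact: nearW.
  rewrite -[X in (_ --> X)%classic](subr0 c0) -[X in _ - X](mulr0 (2 * D)).
  apply: cvgB; first exact: cvg_cst.
  apply: cvgMl_tmp; exact: cvg_harmonic.
rewrite -(cvg_limn_einf_sup vc).1 !limn_einf_lim.
apply: lee_lim; [exact: is_cvg_einfs | exact: is_cvg_einfs | ].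
near=> n.
apply: le_ereal_inf_tmp => _ [k /= nk <-].
apply: (@le_trans _ _ (v k)).
  by apply: ereal_inf_lbound; exists k.
apply: uv; apply: leq_trans nk.
near: n; by exists 1%N.
Unshelve. all: by end_near.
Qed.
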